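(* For every $\mathcal{V}$-poset $P$: $\mathcal{P}(P;1,1)$ is the number of maximal antichains of $P$; $\mathcal{P}(P;x,0)=x^{m}$ where $m$ is the number of basic elements of $P$; $\mathcal{P}(P;0,1)$ is the number of maximal antichains of $P$ containing no basic elements; $\mathcal{P}(P;2,1)$ is the number of antichains of $P$ (including the empty set); $\mathcal{P}(P;1,2)$ is the number of cutsets of $P$; $\mathcal{P}(P;2,2)=2^{|P|}$.
   Context: All posets are finite. A $\mathcal{V}$-poset is a poset generated from the empty poset by repeatedly applying: disjoint union of $\mathcal{V}$-posets, adding a new greatest element, adding a new least element. The polynomial $\mathcal{P}$ is defined on $\mathcal{V}$-posets by: $\mathcal{P}(\emptyset;x,y)=1$; $\mathcal{P}(\bullet;x,y)=x$ for the one-element poset; $\mathcal{P}(\bigcup_iP_i;x,y)=\prod_i\mathcal{P}(P_i;x,y)$ for a disjoint union; and $\mathcal{P}(P\cup\{g\};x,y)=\mathcal{P}(P\cup\{\ell\};x,y)=\mathcal{P}(P;x,y)+y^{|P|}$ where $g$ (resp. $\ell$) is a new greatest (resp. least) element. An element $x$ is basic if: (B.1) there are no two incomparable elements $u,v$ with $x>u$ and $x>v$; (B.2) there are no two incomparable elements $u,v$ with $x<u$ and $x<v$; (B.3) there is no element $u$ with $u<x$ such that for all $w\neq u,x$ one has ($u\ge w\iff x\ge w$) and ($u\le w\iff x\le w$). An antichain is a set of pairwise incomparable elements; a maximal antichain is one not properly contained in another antichain. A chain is a linearly ordered subset; a cutset is a subset of $P$ meeting every maximal chain. *)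

(* Defs.v *)
From mathcomp Require Import all_boot all_order all_algebra.
Set Implicit Arguments. Unset Strict Implicit. Unset Printing Implicit Defensive.
Import GRing.Theory.

(* Syntax of (nonempty) V-posets: built from the one-element poset by binary
   disjoint union, adding a new greatest element, adding a new least element. *)
Inductive vtree : Type :=
| VPoint : vtree
| VUnion : vtree -> vtree -> vtree
| VTop : vtree -> vtree
| VBot : vtree -> vtree.

Fixpoint vsize (t : vtree) : nat :=
  match t with
  | VPoint => 1
  | VUnion a b => vsize a + vsize b
  | VTop a => (vsize a).+1
  | VBot a => (vsize a).+1
  end.

(* The order on elements 0..vsize t - 1.  In VUnion a b, the elements of a come
   first, those of b are shifted by vsize a.  In VTop a / VBot a the new element
   has index vsize a. *)
Fixpoint vle (t : vtree) (i j : nat) : bool :=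
  match t with
  | VPoint => (i == 0) && (j == 0)
  | VUnion a b =>
      let n := vsize a in
      if (i < n) && (j < n) then vle a i j
      else if (n <= i) && (n <= j) then vle b (i - n) (j - n) else false
  | VTop a =>
      let n := vsize a in
      ((j == n) && (i <= n)) || ((i < n) && (j < n) && vle a i j)
  | VBot a =>
      let n := vsize a in
      ((i == n) && (j <= n)) || ((i < n) && (j < n) && vle a i j)
  end.

Definition vord (t : vtree) : rel 'I_(vsize t) := fun i j => vle t i j.
Arguments vord t : clear implicits.

Fixpoint vpoly (R : comNzRingType) (t : vtree) (x y : R) : R :=
  match t with
  | VPoint => x
  | VUnion a b => vpoly a x y * vpoly b x y
  | VTop a => vpoly a x y + y ^+ vsize a
  | VBot a => vpoly a x y + y ^+ vsize a
  end.

Section PosetNotions.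
Variables (T : finType) (le : rel T).

Definition plt (x y : T) := le x y && (x != y).
Definition incomp (u v : T) := ~~ le u v && ~~ le v u.

Definition antichain (A : {set T}) :=
  [forall u in A, forall v in A, (u != v) ==> incomp u v].
Definition maximal_antichain (A : {set T}) :=
  antichain A && [forall B : {set T}, (antichain B && (A \subset B)) ==> (B == A)].

Definition chain (C : {set T}) := [forall u in C, forall v in C, le u v || le v u].
Definition maximal_chain (C : {set T}) :=
  chain C && [forall D : {set T}, (chain D && (C \subset D)) ==> (D == C)].
Definition cutset (S : {set T}) :=
  [forall C : {set T}, maximal_chain C ==> ~~ [disjoint S & C]].

Definition basic (x : T) :=
  ~~ [exists u, exists v, [&& plt u x, plt v x & incomp u v]] &&
  ~~ [exists u, exists v, [&& plt x u, plt x v & incomp u v]] &&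
  ~~ [exists u, plt u x &&
                 [forall w, ((w != u) && (w != x)) ==>
                            ((le w u == le w x) && (le u w == le x w))]].
End PosetNotions.

(* Main.v *)
Require Import Defs.
From mathcomp Require Import all_boot all_order all_algebra.
Import GRing.Theory.
Set Implicit Arguments. Unset Strict Implicit. Unset Printing Implicit Defensive.

Definition po (T : finType) (le : rel T) :=
  [/\ reflexive le, antisymmetric le & transitive le].
Definition flip (T : Type) (le : rel T) : rel T := fun x y => le y x.

Lemma forall_imset (aT rT : finType) (f : aT -> rT) (A : {set aT}) (P : pred rT) :
  [forall v in f @: A, P v] = [forall x in A, P (f x)].
Proof.
apply/forall_inP/forall_inP => H x xA; first by apply: H; exact: imset_f.
by case/imsetP: xA => y yA ->; apply: H.
Qed.

Lemma forall_setU (T : finType) (A B : {set T}) (P : pred T) :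
  [forall v in A :|: B, P v] = [forall v in A, P v] && [forall v in B, P v].
Proof.
apply/forall_inP/andP => [H | [/forall_inP HA /forall_inP HB] v].
  by split; apply/forall_inP => v vA; apply: H; rewrite inE vA ?orbT.
by rewrite inE => /orP [] ?; [apply: HA | apply: HB].
Qed.

Lemma card_allsets (T : finType) : #|[set S : {set T} | true]| = 2 ^ #|T|.
Proof.
have -> : [set S : {set T} | true] = powerset [set: T].
  by apply/setP => S; rewrite !inE subsetT.
by rewrite card_powerset cardsT.
Qed.

Section Gen.
Variables (T : finType) (le : rel T).

Lemma plt_irr x : plt le x x = false.
Proof. by rewrite /plt eqxx andbF. Qed.

Lemma antichainP (A : {set T}) :
  reflect {in A &, forall u v, u != v -> incomp le u v} (antichain le A).
Proof.
apply: (iffP forall_inP) => [H u v uA vA uv | H u uA].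
  by move/forall_inP: (H u uA) => /(_ v vA) /implyP; apply.
by apply/forall_inP => v vA; apply/implyP; apply: H.
Qed.

Lemma antichain1 a : antichain le [set a].
Proof. by apply/antichainP => u v; rewrite !inE => /eqP-> /eqP->; rewrite eqxx. Qed.

Lemma maxantiP (A : {set T}) :
  reflect (antichain le A /\
           forall x, x \notin A -> exists2 a, a \in A & le x a || le a x)
          (maximal_antichain le A).
Proof.
apply: (iffP andP) => -[acA H]; split => //.
  move=> x xA; apply/exists_inP; apply: contraNT xA => /exists_inPn nc.
  have ac : antichain le (x |: A).
    apply/antichainP => u v; rewrite !in_setU1.
    case/orP => [/eqP-> | uA]; case/orP => [/eqP-> | vA]; rewrite ?eqxx //.
    - by move=> _; move: (nc v vA); rewrite /incomp negb_or.
    - by move=> _; move: (nc u uA); rewrite /incomp negb_or andbC.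
    - by move=> uv; move/antichainP: acA; apply.
  have /implyP P := forallP H (x |: A).
  rewrite subsetUr andbT in P.
  by have /eqP <- := P ac; rewrite in_setU1 eqxx.
apply/forallP => B; apply/implyP => /andP [acB AB].
rewrite eqEsubset AB andbT; apply/subsetP => x xB; apply: contraT => xA.
have [a aA cxa] := H x xA.
have xa : x != a by apply: contraNneq xA => ->.
move/antichainP: acB => acB.
have := acB x a xB (subsetP AB a aA) xa.
by rewrite /incomp -negb_or cxa.
Qed.

Lemma chainP (C : {set T}) :
  reflect {in C &, forall u v, le u v || le v u} (chain le C).
Proof.
apply: (iffP forall_inP) => [H u v uC vC | H u uC].
  by move/forall_inP: (H u uC) => /(_ v vC).
by apply/forall_inP => v vC; apply: H.
Qed.

Lemma chain0 : chain le set0.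
Proof. by apply/chainP => u; rewrite inE. Qed.

Lemma cutsetP (S : {set T}) :
  reflect (forall C, maximal_chain le C -> exists2 x, x \in S & x \in C)
          (cutset le S).
Proof.
apply: (iffP forallP) => [H C mC | H C]; last first.
  apply/implyP => mC; have [x xS xC] := H C mC.
  by rewrite -setI_eq0; apply/set0Pn; exists x; rewrite inE xS xC.
move/implyP: (H C) => /(_ mC); rewrite -setI_eq0 => /set0Pn [x].
by rewrite inE => /andP [xS xC]; exists x.
Qed.

Hypothesis refl : reflexive le.

Lemma maxchainP (C : {set T}) :
  reflect (chain le C /\ forall x, x \notin C -> exists2 c, c \in C & incomp le x c)
          (maximal_chain le C).
Proof.
apply: (iffP andP) => -[chC H]; split => //.
  move=> x xC; apply/exists_inP; apply: contraNT xC => /exists_inPn nc.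
  have ch : chain le (x |: C).
    apply/chainP => u v; rewrite !in_setU1.
    case/orP => [/eqP-> | uC]; case/orP => [/eqP-> | vC].
    - by rewrite refl.
    - by move: (nc v vC); rewrite /incomp negb_and !negbK.
    - by move: (nc u uC); rewrite /incomp negb_and !negbK orbC.
    - by move/chainP: chC; apply.
  have /implyP P := forallP H (x |: C).
  rewrite subsetUr andbT in P.
  by have /eqP <- := P ch; rewrite in_setU1 eqxx.
apply/forallP => D; apply/implyP => /andP [chD CD].
rewrite eqEsubset CD andbT; apply/subsetP => x xD; apply: contraT => xC.
have [c cC] := H x xC; rewrite /incomp -negb_or => /negP[].
by move/chainP: chD; apply => //; apply: (subsetP CD).
Qed.

Hypothesis asym : antisymmetric le.
Hypothesis tr : transitive le.

Lemma exists_min (x0 : T) : (forall a b, ~~ incomp le a b) ->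
  exists m, forall c, c != m -> le m c && ~~ le c m.
Proof.
move=> tot.
case: (@arg_minnP _ x0 predT (fun x => #|[set c | le c x]|) isT) => m _ Hm.
exists m => c cm.
have : le m c || le c m by move: (tot m c); rewrite /incomp negb_and !negbK.
case Hcm: (le c m); last by rewrite orbF andbT.
move=> _; exfalso.
have : #|[set d | le d c]| < #|[set d | le d m]|.
  apply: proper_card; apply/properP; split.
    by apply/subsetP => d; rewrite !inE => dc; exact: tr dc Hcm.
  exists m; rewrite !inE ?refl //; apply/negP => mc.
  by move/negP: cm; apply; apply/eqP; apply: asym; rewrite mc Hcm.
by rewrite ltnNge Hm.
Qed.

End Gen.

Lemma po_flip (T : finType) (le : rel T) : po le -> po (flip le).
Proof.
case=> r a t; split => //.
  by move=> x y; rewrite /flip andbC => /a.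
by move=> y x z; rewrite /flip => xy yz; exact: t yz xy.
Qed.

Lemma ac_flip (T : finType) (le : rel T) A : antichain (flip le) A = antichain le A.
Proof.
by apply/antichainP/antichainP => H u v uA vA uv; apply: (H v u vA uA); rewrite eq_sym.
Qed.

Lemma ma_flip (T : finType) (le : rel T) A :
  maximal_antichain (flip le) A = maximal_antichain le A.
Proof.
apply/maxantiP/maxantiP => -[ac H]; split.
- by rewrite -ac_flip.
- by move=> x /H [a aA c]; exists a => //; rewrite orbC.
- by rewrite ac_flip.
- by move=> x /H [a aA c]; exists a => //; rewrite /flip orbC.
Qed.

Lemma ch_flip (T : finType) (le : rel T) C : chain (flip le) C = chain le C.
Proof. by apply/chainP/chainP => H u v uC vC; rewrite orbC; apply: H. Qed.

Lemma mc_flip (T : finType) (le : rel T) C : reflexive le ->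
  maximal_chain (flip le) C = maximal_chain le C.
Proof.
move=> r; have r' : reflexive (flip le) by [].
apply/(maxchainP r')/(maxchainP r) => -[ch H]; split.
- by rewrite -ch_flip.
- by move=> x /H [c cC i]; exists c => //; rewrite /incomp andbC.
- by rewrite ch_flip.
- by move=> x /H [c cC i]; exists c => //; rewrite /incomp /flip andbC.
Qed.

Lemma cs_flip (T : finType) (le : rel T) S : reflexive le ->
  cutset (flip le) S = cutset le S.
Proof.
move=> r; apply/cutsetP/cutsetP => H C mC; apply: H.
  by rewrite mc_flip.
by rewrite -(mc_flip _ r).
Qed.
Record ext_struct (T T' : finType) (h : T -> T') (g : T') : Prop := ExtStruct {
  es_inj : injective h;
  es_hNg : forall x, h x != g;
  es_surj : forall z, z != g -> exists x, z = h x }.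

Variant tspec (T T' : finType) (h : T -> T') (g : T') (z : T') : Prop :=
  TG of z = g | TH x of z = h x.

Section Ext.
Variables (T T' : finType) (h : T -> T') (g : T').
Hypothesis HE : ext_struct h g.

Lemma tP z : tspec h g z.
Proof. by case: (eqVneq z g) => [->|/(es_surj HE) [x ->]]; [apply: TG | apply: TH]. Qed.

Lemma e_hh x y : (h x == h y) = (x == y).
Proof. exact: (inj_eq (es_inj HE)). Qed.
Lemma e_hg x : (h x == g) = false.
Proof. exact: negbTE (es_hNg HE x). Qed.
Lemma e_gh x : (g == h x) = false.
Proof. by rewrite eq_sym e_hg. Qed.
Lemma e_mh (A : {set T}) x : (h x \in h @: A) = (x \in A).
Proof. exact: mem_imset _ _ (es_inj HE). Qed.
Lemma e_gnin (A : {set T}) : (g \in h @: A) = false.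
Proof. by apply/imsetP => -[x _ /eqP]; rewrite e_gh. Qed.

Lemma set_dec (A' : {set T'}) : g \in A' -> A' = g |: h @: (h @^-1: A').
Proof.
move=> gA; apply/setP => z; case: (tP z) => [->|x ->];
  by rewrite in_setU1 ?eqxx ?gA ?e_hg ?e_mh ?inE.
Qed.

Lemma set_dec' (A' : {set T'}) : g \notin A' -> A' = h @: (h @^-1: A').
Proof.
move=> gA; apply/setP => z; case: (tP z) => [->|x ->].
  by rewrite e_gnin (negbTE gA).
by rewrite e_mh inE.
Qed.

Lemma card_split (Q : pred {set T'}) :
  #|[set A' | Q A']| = #|[set A : {set T} | Q (h @: A)]| + #|[set A : {set T} | Q (g |: h @: A)]|.
Proof.
pose F1 := fun A : {set T} => h @: A.
pose F2 := fun A : {set T} => g |: h @: A.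
have i1 : injective F1.
  move=> A B E; apply/setP => x; have := congr1 (fun S : {set T'} => h x \in S) E.
  by rewrite /F1 /= !e_mh.
have i2 : injective F2.
  move=> A B E; apply/setP => x; have := congr1 (fun S : {set T'} => h x \in S) E.
  by rewrite /F2 /= !in_setU1 e_hg !e_mh.
have -> : [set A' | Q A'] = F1 @: [set A | Q (F1 A)] :|: F2 @: [set A | Q (F2 A)].
  apply/setP => A'; rewrite inE in_setU; apply/idP/idP.
  - move=> QA; case: (boolP (g \in A')) => gA.
      apply/orP; right; apply/imsetP; exists (h @^-1: A'); last exact: set_dec.
      by rewrite inE /F2 -set_dec.
    apply/orP; left; apply/imsetP; exists (h @^-1: A'); last exact: set_dec'.
    by rewrite inE /F1 -set_dec'.
  - case/orP => /imsetP [A QA ->]; by move: QA; rewrite inE.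
rewrite cardsU.
have -> : F1 @: [set A | Q (F1 A)] :&: F2 @: [set A | Q (F2 A)] = set0.
  apply/setP => S; rewrite !inE; apply/negP => /andP [/imsetP [A _ ->]].
  case/imsetP => B _ /setP E; have := E g.
  by rewrite /F1 /F2 in_setU1 eqxx e_gnin.
by rewrite cards0 subn0 !card_imset.
Qed.

End Ext.

Section Top.
Variables (T T' : finType) (le : rel T) (le' : rel T') (h : T -> T') (g : T').
Hypothesis HE : ext_struct h g.
Hypothesis le_hh : forall x y, le' (h x) (h y) = le x y.
Hypothesis le_zg : forall z, le' z g.
Hypothesis le_gh : forall x, le' g (h x) = false.
Hypothesis Hpo : po le.
Variable x0 : T.

Let hh := e_hh HE.
Let hg := e_hg HE.
Let gh := e_gh HE.
Let mh := e_mh HE.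
Let gnin := e_gnin HE.
Let tP := tP HE.
Let refl : reflexive le. Proof. by case: Hpo. Qed.
Let asym : antisymmetric le. Proof. by case: Hpo. Qed.
Let tr : transitive le. Proof. by case: Hpo. Qed.

Let plt_hh x y : plt le' (h x) (h y) = plt le x y.
Proof. by rewrite /plt le_hh hh. Qed.
Let plt_hg x : plt le' (h x) g.
Proof. by rewrite /plt le_zg hg. Qed.
Let plt_gh x : plt le' g (h x) = false.
Proof. by rewrite /plt le_gh. Qed.
Let inc_hh x y : incomp le' (h x) (h y) = incomp le x y.
Proof. by rewrite /incomp !le_hh. Qed.
Let inc_zg z : incomp le' z g = false.
Proof. by rewrite /incomp le_zg. Qed.
Let inc_gz z : incomp le' g z = false.
Proof. by rewrite /incomp le_zg andbF. Qed.

Lemma top_po : po le'.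
Proof.
split.
- by move=> z; case: (tP z) => [->|x ->]; rewrite ?le_zg ?le_hh ?refl.
- move=> u v; case: (tP u) => [->|a ->]; case: (tP v) => [->|b ->];
    rewrite ?le_zg ?le_gh ?le_hh ?andbF //.
  by move/asym ->.
- move=> v u w; case: (tP u) => [->|a ->]; case: (tP v) => [->|b ->];
    case: (tP w) => [->|c ->]; rewrite ?le_zg ?le_gh ?le_hh //.
  exact: tr.
Qed.
Let refl' : reflexive le'. Proof. by case: top_po. Qed.

Lemma ac_h (A : {set T}) : antichain le' (h @: A) = antichain le A.
Proof.
apply/antichainP/antichainP => H u v.
  by move=> uA vA uv; have := H (h u) (h v); rewrite !mh hh inc_hh; apply.
case: (tP u) => [->|a ->]; rewrite ?gnin ?mh // => aA.
case: (tP v) => [->|b ->]; rewrite ?gnin ?mh // => bA.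
rewrite hh inc_hh; exact: H.
Qed.

Lemma ac_g (A : {set T}) : antichain le' (g |: h @: A) = (A == set0).
Proof.
apply/idP/eqP => [acA | ->]; last by rewrite imset0 setU0; exact: antichain1.
apply/eqP; apply: contraTT acA => /set0Pn [x xA].
apply/negP => /antichainP H.
have := H g (h x); rewrite !in_setU1 eqxx mh xA gh orbT inc_gz.
by move=> /(_ isT isT isT).
Qed.

Let A_nonempty (A : {set T}) : maximal_antichain le A -> exists2 a, a \in A & true.
Proof.
case/maxantiP => _ H.
by case: (boolP (x0 \in A)) => [x0A | /H [a aA _]]; [exists x0 | exists a].
Qed.

Lemma ma_h (A : {set T}) : maximal_antichain le' (h @: A) = maximal_antichain le A.
Proof.
apply/idP/idP => mA.
  case/maxantiP: mA => acA H; apply/maxantiP; split; first by rewrite -ac_h.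
  move=> x xA; have xA' : h x \notin h @: A by rewrite mh.
  have [a' aA' c] := H _ xA'; move: aA' c.
  case: (tP a') => [->|a ->]; rewrite ?gnin ?mh // => aA.
  by rewrite !le_hh => c; exists a.
have [a aA _] := A_nonempty mA.
case/maxantiP: mA => acA H; apply/maxantiP; split; first by rewrite ac_h.
move=> z; case: (tP z) => [-> _|x ->].
  by exists (h a); rewrite ?mh ?le_zg ?orbT.
rewrite mh => /H [b bA c]; exists (h b); by rewrite ?mh ?le_hh.
Qed.

Lemma ma_g (A : {set T}) : maximal_antichain le' (g |: h @: A) = (A == set0).
Proof.
apply/maxantiP/eqP => [[acA _] | ->]; first by apply/eqP; rewrite -ac_g.
rewrite imset0 setU0; split; first exact: antichain1.
by move=> z _; exists g; rewrite ?inE ?le_zg.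
Qed.

Lemma bas_h x : basic le' (h x) = basic le x.
Proof.
rewrite /basic; congr (~~ _ && ~~ _ && ~~ _).
- apply/existsP/existsP => -[u /existsP [v /and3P [uh vh uv]]].
    move: uh vh uv; case: (tP u) => [->|a ->]; case: (tP v) => [->|b ->];
      rewrite ?plt_gh ?plt_hh ?inc_hh ?andbF // => ah bh ab.
    by exists a; apply/existsP; exists b; rewrite ah bh ab.
  by exists (h u); apply/existsP; exists (h v); rewrite !plt_hh inc_hh uh vh uv.
- apply/existsP/existsP => -[u /existsP [v /and3P [uh vh uv]]].
    move: uh vh uv; case: (tP u) => [->|a ->]; case: (tP v) => [->|b ->];
      rewrite ?inc_gz ?inc_zg ?plt_hh ?inc_hh ?andbF // => ah bh ab.
    by exists a; apply/existsP; exists b; rewrite ah bh ab.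
  by exists (h u); apply/existsP; exists (h v); rewrite !plt_hh inc_hh uh vh uv.
- apply/existsP/existsP => -[u /andP [uh /forallP W]].
    move: uh W; case: (tP u) => [->|a ->]; rewrite ?plt_gh ?plt_hh // => ah W.
    exists a; rewrite ah /=; apply/forallP => w; have := W (h w).
    by rewrite !hh !le_hh.
  exists (h u); rewrite plt_hh uh /=; apply/forallP => w.
  case: (tP w) => [->|c ->]; rewrite ?gh ?le_gh ?le_zg ?hh ?le_hh //=; exact: W.
Qed.

Lemma bas_g : basic le' g = false.
Proof.
apply/negP; rewrite /basic => /andP [/andP [B1 _] B3].
have tot : forall a b, ~~ incomp le a b.
  move=> a b; apply/negP => ab; move/existsP: B1; apply; exists (h a).
  by apply/existsP; exists (h b); rewrite !plt_hg inc_hh.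
have pof : po (flip le) by apply: po_flip.
case: pof => rf af tf.
have [m Hm] := exists_min rf af tf x0 (fun a b => tot b a).
move/existsP: B3; apply; exists (h m); rewrite plt_hg /=; apply/forallP => w.
case: (tP w) => [->|c ->]; rewrite ?eqxx ?hh ?le_hh ?le_zg ?le_gh ?andbF //=.
apply/implyP => /andP [cm _]; have /andP [E1 /negbTE E2] := Hm c cm.
by rewrite /flip in E1 E2; rewrite E1 E2.
Qed.

Lemma top_AC : #|[set A' | antichain le' A']| = #|[set A | antichain le A]| + 1.
Proof.
rewrite (card_split HE (fun A' => antichain le' A')).
have -> : [set A : {set T} | antichain le' (h @: A)] = [set A | antichain le A].
  by apply/setP => A; rewrite !inE ac_h.
have -> : [set A : {set T} | antichain le' (g |: h @: A)] = [set set0].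
  by apply/setP => A; rewrite !inE ac_g.
by rewrite cards1.
Qed.

Lemma top_MA : #|[set A' | maximal_antichain le' A']| =
               #|[set A | maximal_antichain le A]| + 1.
Proof.
rewrite (card_split HE (fun A' => maximal_antichain le' A')).
have -> : [set A : {set T} | maximal_antichain le' (h @: A)] = [set A | maximal_antichain le A].
  by apply/setP => A; rewrite !inE ma_h.
have -> : [set A : {set T} | maximal_antichain le' (g |: h @: A)] = [set set0].
  by apply/setP => A; rewrite !inE ma_g.
by rewrite cards1.
Qed.

Lemma top_bas : #|[set z | basic le' z]| = #|[set x | basic le x]|.
Proof.
have -> : [set z | basic le' z] = h @: [set x | basic le x].
  apply/setP => z; case: (tP z) => [->|x ->].
    by rewrite gnin inE bas_g.
  by rewrite mh !inE bas_h.
by rewrite card_imset //; exact: es_inj HE.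
Qed.

Lemma top_MA0 :
  #|[set A' | maximal_antichain le' A' & [forall v in A', ~~ basic le' v]]| =
  #|[set A | maximal_antichain le A & [forall v in A, ~~ basic le v]]| + 1.
Proof.
rewrite (card_split HE (fun A' => maximal_antichain le' A' && [forall v in A', ~~ basic le' v])).
have -> : [set A : {set T} | maximal_antichain le' (h @: A) && [forall v in h @: A, ~~ basic le' v]]
    = [set A | maximal_antichain le A & [forall v in A, ~~ basic le v]].
  apply/setP => A; rewrite !inE ma_h forall_imset; congr (_ && _).
  by apply/forall_inP/forall_inP => H v vA; have := H v vA; rewrite bas_h.
have -> : [set A : {set T} | maximal_antichain le' (g |: h @: A) &&
                   [forall v in g |: h @: A, ~~ basic le' v]] = [set set0].
  apply/setP => A; rewrite !inE ma_g; case: eqP => //= ->.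
  rewrite imset0 setU0; apply/forall_inP => v; rewrite inE => /eqP ->.
  by rewrite bas_g.
by rewrite cards1.
Qed.

Lemma ch_h (C : {set T}) : chain le' (h @: C) = chain le C.
Proof.
apply/chainP/chainP => H u v.
  by move=> uC vC; have := H (h u) (h v); rewrite !mh !le_hh; apply.
case: (tP u) => [->|a ->]; rewrite ?gnin ?mh // => aC.
case: (tP v) => [->|b ->]; rewrite ?gnin ?mh // => bC.
rewrite !le_hh; exact: H.
Qed.

Lemma ch_g (C : {set T}) : chain le' (g |: h @: C) = chain le C.
Proof.
apply/chainP/chainP => H u v.
  by move=> uC vC; have := H (h u) (h v); rewrite !in_setU1 !hg !mh !le_hh; apply.
rewrite !in_setU1; case: (tP u) => [->|a ->]; rewrite ?eqxx ?hg ?mh ?le_zg ?orbT //= => aC.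
case: (tP v) => [->|b ->]; rewrite ?eqxx ?hg ?mh ?le_zg ?orbT //= => bC.
rewrite !le_hh; exact: H.
Qed.

Lemma mc_in (C' : {set T'}) : maximal_chain le' C' -> g \in C'.
Proof.
move/(maxchainP refl') => [_ H]; apply: contraT => /H [c _].
by rewrite inc_gz.
Qed.

Lemma mc_g (C : {set T}) : maximal_chain le' (g |: h @: C) = maximal_chain le C.
Proof.
apply/(maxchainP refl')/(maxchainP refl) => -[chC H].
  split; first by rewrite -ch_g.
  move=> x xC; have xC' : h x \notin g |: h @: C by rewrite in_setU1 hg mh.
  have [c' cC' i] := H _ xC'; move: cC' i.
  case: (tP c') => [->|c ->]; rewrite ?inc_zg // in_setU1 hg mh inc_hh => cC ixc.
  by exists c.
split; first by rewrite ch_g.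
move=> z; rewrite in_setU1 negb_or => /andP [zg].
case: (tP z) zg => [->|x ->]; rewrite ?eqxx // => _; rewrite mh => /H [c cC ixc].
by exists (h c); rewrite ?in_setU1 ?hg ?mh ?inc_hh.
Qed.

Lemma cs_h (S : {set T}) : cutset le' (h @: S) = cutset le S.
Proof.
apply/cutsetP/cutsetP => H C mC.
  have mC' : maximal_chain le' (g |: h @: C) by rewrite mc_g.
  have [z zS zC] := H _ mC'; move: zS zC.
  case: (tP z) => [->|x ->]; rewrite ?gnin ?mh ?in_setU1 ?hg ?mh // => xS xC.
  by exists x.
have gC := mc_in mC; have E := set_dec HE gC.
rewrite E mc_g in mC; have [x xS xC] := H _ mC.
by exists (h x); rewrite ?mh // E in_setU1 hg mh.
Qed.

Lemma cs_g (S : {set T}) : cutset le' (g |: h @: S).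
Proof. by apply/cutsetP => C mC; exists g; [rewrite in_setU1 eqxx | apply: mc_in]. Qed.

Lemma top_CS : #|[set S' | cutset le' S']| = #|[set S | cutset le S]| + 2 ^ #|T|.
Proof.
rewrite (card_split HE (fun S' => cutset le' S')).
have -> : [set S : {set T} | cutset le' (h @: S)] = [set S | cutset le S].
  by apply/setP => A; rewrite !inE cs_h.
have -> : [set S : {set T} | cutset le' (g |: h @: S)] = [set S : {set T} | true].
  by apply/setP => A; rewrite !inE cs_g.
by rewrite card_allsets.
Qed.

End Top.

Section Bot.
Variables (T T' : finType) (le : rel T) (le' : rel T') (h : T -> T') (g : T').
Hypothesis HE : ext_struct h g.
Hypothesis le_hh : forall x y, le' (h x) (h y) = le x y.
Hypothesis le_gz : forall z, le' g z.
Hypothesis le_hg : forall x, le' (h x) g = false.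
Hypothesis Hpo : po le.
Variable x0 : T.

Let fhh : forall x y, flip le' (h x) (h y) = flip le x y.
Proof. by move=> x y; rewrite /flip le_hh. Qed.
Let fzg : forall z, flip le' z g. Proof. exact: le_gz. Qed.
Let fgh : forall x, flip le' g (h x) = false. Proof. exact: le_hg. Qed.
Let fpo : po (flip le). Proof. exact: po_flip. Qed.

Lemma bot_po : po le'.
Proof. exact: (po_flip (top_po HE fhh fzg fgh fpo)). Qed.

Let hh := e_hh HE.
Let hg := e_hg HE.
Let gh := e_gh HE.
Let mh := e_mh HE.
Let gnin := e_gnin HE.
Let tP := tP HE.
Let refl : reflexive le. Proof. by case: Hpo. Qed.
Let asym : antisymmetric le. Proof. by case: Hpo. Qed.
Let tr : transitive le. Proof. by case: Hpo. Qed.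
Let refl' : reflexive le'. Proof. by case: bot_po. Qed.

Lemma bot_AC : #|[set A' | antichain le' A']| = #|[set A | antichain le A]| + 1.
Proof.
have := top_AC HE fhh fzg.
have -> : [set A' | antichain (flip le') A'] = [set A' | antichain le' A'].
  by apply/setP => A; rewrite !inE ac_flip.
have -> : [set A | antichain (flip le) A] = [set A | antichain le A].
  by apply/setP => A; rewrite !inE ac_flip.
by [].
Qed.

Lemma bot_MA : #|[set A' | maximal_antichain le' A']| =
               #|[set A | maximal_antichain le A]| + 1.
Proof.
have := top_MA HE fhh fzg x0.
have -> : [set A' | maximal_antichain (flip le') A'] = [set A' | maximal_antichain le' A'].
  by apply/setP => A; rewrite !inE ma_flip.
have -> : [set A | maximal_antichain (flip le) A] = [set A | maximal_antichain le A].
  by apply/setP => A; rewrite !inE ma_flip.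
by [].
Qed.

Lemma bot_CS : #|[set S' | cutset le' S']| = #|[set S | cutset le S]| + 2 ^ #|T|.
Proof.
have := top_CS HE fhh fzg fgh fpo.
have -> : [set A' | cutset (flip le') A'] = [set A' | cutset le' A'].
  by apply/setP => A; rewrite !inE cs_flip.
have -> : [set A | cutset (flip le) A] = [set A | cutset le A].
  by apply/setP => A; rewrite !inE cs_flip.
by [].
Qed.

Let bma_h (A : {set T}) : maximal_antichain le' (h @: A) = maximal_antichain le A.
Proof. by rewrite -ma_flip (ma_h HE fhh fzg x0) ma_flip. Qed.
Let bma_g (A : {set T}) : maximal_antichain le' (g |: h @: A) = (A == set0).
Proof. by rewrite -ma_flip (ma_g HE fzg). Qed.

Let plt_hh x y : plt le' (h x) (h y) = plt le x y.
Proof. by rewrite /plt le_hh hh. Qed.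
Let plt_gh x : plt le' g (h x).
Proof. by rewrite /plt le_gz gh. Qed.
Let plt_hg x : plt le' (h x) g = false.
Proof. by rewrite /plt le_hg. Qed.
Let inc_hh x y : incomp le' (h x) (h y) = incomp le x y.
Proof. by rewrite /incomp !le_hh. Qed.
Let inc_zg z : incomp le' z g = false.
Proof. by rewrite /incomp le_gz andbF. Qed.
Let inc_gz z : incomp le' g z = false.
Proof. by rewrite /incomp le_gz. Qed.

Definition smin (x : T) := [forall c, (c != x) ==> (le x c && ~~ le c x)].

Let smin_le m : smin m -> forall c, le m c.
Proof.
move=> sm c; case: (eqVneq c m) => [->|cm]; first exact: refl.
by have /andP [] := implyP (forallP sm c) cm.
Qed.

Let smin_uniq m x : smin m -> smin x -> x = m.
Proof.
by move=> sm sx; apply: asym; rewrite (smin_le sm) (smin_le sx).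
Qed.

Lemma bbas_g : basic le' g = ~~ [exists a, exists b, incomp le a b].
Proof.
rewrite /basic.
have -> : [exists u, exists v, [&& plt le' u g, plt le' v g & incomp le' u v]] = false.
  by apply/existsP => -[u /existsP [v]]; case: (tP u) => [->|a ->];
    rewrite ?plt_irr ?plt_hg.
have -> : [exists u, plt le' u g && [forall w, ((w != u) && (w != g)) ==>
            ((le' w u == le' w g) && (le' u w == le' g w))]] = false.
  by apply/existsP => -[u]; case: (tP u) => [->|a ->]; rewrite ?plt_irr ?plt_hg.
rewrite andbT /=; congr (~~ _).
apply/existsP/existsP => -[u /existsP [v]].
  case: (tP u) => [->|a ->]; rewrite ?plt_irr // plt_gh /=.
  case: (tP v) => [->|b ->]; rewrite ?plt_irr // plt_gh inc_hh /= => ab.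
  by exists a; apply/existsP; exists b.
by move=> uv; exists (h u); apply/existsP; exists (h v); rewrite !plt_gh inc_hh.
Qed.

Lemma bbas_h x : basic le' (h x) = basic le x && ~~ smin x.
Proof.
rewrite /basic -andbA -[in RHS]andbA -[in RHS]andbA; congr (~~ _ && _).
  apply/existsP/existsP => -[u /existsP [v /and3P [uh vh uv]]].
    move: uh vh uv; case: (tP u) => [->|a ->]; case: (tP v) => [->|b ->];
      rewrite ?inc_gz ?inc_zg ?plt_hh ?inc_hh ?andbF // => ah bh ab.
    by exists a; apply/existsP; exists b; rewrite ah bh ab.
  by exists (h u); apply/existsP; exists (h v); rewrite !plt_hh inc_hh uh vh uv.
congr (~~ _ && _).
  apply/existsP/existsP => -[u /existsP [v /and3P [uh vh uv]]].
    move: uh vh uv; case: (tP u) => [->|a ->]; case: (tP v) => [->|b ->];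
      rewrite ?plt_hg ?plt_hh ?inc_hh ?andbF // => ah bh ab.
    by exists a; apply/existsP; exists b; rewrite ah bh ab.
  by exists (h u); apply/existsP; exists (h v); rewrite !plt_hh inc_hh uh vh uv.
rewrite -negb_or; congr (~~ _).
apply/existsP/orP.
  case=> u /andP [pu /forallP W]; move: pu W; case: (tP u) => [->|a ->] pu W.
    right; apply/forallP => c; apply/implyP => cx; have := W (h c).
    rewrite hg hh cx le_hg le_gz !le_hh /= => /andP [/eqP E1 /eqP E2].
    by rewrite -E1 -E2.
  left; apply/existsP; exists a; rewrite -plt_hh pu /=; apply/forallP => w.
  by have := W (h w); rewrite !hh !le_hh.
case=> [/existsP [a /andP [pa /forallP W]] | sx].
  exists (h a); rewrite plt_hh pa /=; apply/forallP => w.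
  case: (tP w) => [->|c ->]; rewrite ?le_hh ?le_gz ?le_hg ?hh ?eqxx ?implybT //=; exact: W.
exists g; rewrite plt_gh /=; apply/forallP => w.
case: (tP w) => [->|c ->]; rewrite ?eqxx //= hg hh le_hg le_gz !le_hh /=.
apply/implyP => cx; have /andP [a1 a2] := implyP (forallP sx c) cx.
by rewrite a1 (negbTE a2).
Qed.

Let smin_basic m : smin m -> (forall a b, ~~ incomp le a b) -> basic le m.
Proof.
move=> sm tot; rewrite /basic.
have nplt u : plt le u m = false.
  rewrite /plt; case: (eqVneq u m) => [->|um]; first by rewrite andbF.
  by have /andP [_ /negbTE ->] := implyP (forallP sm u) um.
apply/andP; split; first (apply/andP; split).
- by apply/existsP => -[u /existsP [v]]; rewrite nplt.
- by apply/existsP => -[u /existsP [v /and3P [_ _ iuv]]]; rewrite (negbTE (tot u v)) in iuv.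
- by apply/existsP => -[u]; rewrite nplt.
Qed.

Let smin_noinc m : smin m -> basic le m -> ~~ [exists a, exists b, incomp le a b].
Proof.
move=> sm bm; apply/negP => /existsP [a /existsP [b iab]].
have am : m != a.
  by apply: contraTneq iab => <-; rewrite /incomp (smin_le sm).
have bm' : m != b.
  by apply: contraTneq iab => <-; rewrite /incomp (smin_le sm) andbF.
move: bm; rewrite /basic => /andP [/andP [_ /existsP B2] _]; apply: B2.
exists a; apply/existsP; exists b; rewrite iab /plt !(smin_le sm) /=.
by rewrite am bm'.
Qed.

Lemma bg_iff : basic le' g = [exists m, basic le m && smin m].
Proof.
rewrite bbas_g; apply/idP/existsP => [ni | [m /andP [bm sm]]].
  have tot : forall a b, ~~ incomp le a b.
    by move=> a b; apply: contra ni => iab; apply/existsP; exists a; apply/existsP; exists b.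
  have [m Hm] := exists_min refl asym tr x0 tot.
  have sm : smin m by apply/forallP => c; apply/implyP; exact: Hm.
  by exists m; rewrite sm smin_basic.
exact: (smin_noinc sm bm).
Qed.

Lemma bot_bas : #|[set z | basic le' z]| = #|[set x | basic le x]|.
Proof.
pose S := [set x | basic le x && ~~ smin x].
have cS : #|[set z | basic le' z]| = basic le' g + #|S|.
  case bg: (basic le' g).
    have -> : [set z | basic le' z] = g |: h @: S.
      apply/setP => z; case: (tP z) => [->|x ->].
        by rewrite in_setU1 eqxx inE bg.
      by rewrite in_setU1 hg mh !inE bbas_h.
    by rewrite cardsU1 gnin card_imset //; exact: es_inj HE.
  have -> : [set z | basic le' z] = h @: S.
    apply/setP => z; case: (tP z) => [->|x ->].
      by rewrite gnin inE bg.
    by rewrite mh !inE bbas_h.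
  by rewrite card_imset //; exact: es_inj HE.
rewrite cS bg_iff; case: (boolP [exists m, basic le m && smin m]).
  case/existsP => m /andP [bm sm].
  have -> : S = [set x | basic le x] :\ m.
    apply/setP => x; rewrite !inE; case: (eqVneq x m) => [->|xm] /=.
      by rewrite sm andbF.
    case: (boolP (smin x)) => sx; last by rewrite andbT.
    by rewrite (smin_uniq sm sx) eqxx in xm.
  by rewrite [in RHS](cardsD1 m) inE bm.
move=> nE; rewrite add0n; apply: eq_card => x; rewrite /S !inE.
case: (boolP (basic le x)) => //= bx; apply/negP => sx.
by move/negP: nE; apply; apply/existsP; exists x; rewrite bx.
Qed.

Lemma bot_MA0 :
  #|[set A' | maximal_antichain le' A' & [forall v in A', ~~ basic le' v]]| =
  #|[set A | maximal_antichain le A & [forall v in A, ~~ basic le v]]| + 1.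
Proof.
rewrite (card_split HE (fun A' => maximal_antichain le' A' && [forall v in A', ~~ basic le' v])).
have -> : [set A : {set T} | maximal_antichain le' (h @: A) && [forall v in h @: A, ~~ basic le' v]]
    = [set A | maximal_antichain le A & [forall v in A, ~~ (basic le v && ~~ smin v)]].
  apply/setP => A; rewrite !inE bma_h forall_imset; congr (_ && _).
  by apply/forall_inP/forall_inP => H v vA; have := H v vA; rewrite bbas_h.
have -> : [set A : {set T} | maximal_antichain le' (g |: h @: A) &&
                   [forall v in g |: h @: A, ~~ basic le' v]] =
          [set A | (A == set0) && ~~ basic le' g].
  apply/setP => A; rewrite !inE bma_g; case: eqP => //= ->.
  rewrite imset0 setU0; apply/forall_inP/idP => [|nb v]; first by apply; rewrite inE.
  by rewrite inE => /eqP ->.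
rewrite bg_iff; case: (boolP [exists m, basic le m && smin m]).
  case/existsP => m /andP [bm sm] /=.
  have -> : [set A : {set T} | (A == set0) && false] = set0.
    by apply/setP => A; rewrite !inE andbF.
  rewrite cards0 addn0.
  set M0 := [set A | maximal_antichain le A & [forall v in A, ~~ basic le v]].
  have -> : [set A | maximal_antichain le A & [forall v in A, ~~ (basic le v && ~~ smin v)]]
      = [set m] |: M0.
    apply/setP => A; rewrite in_setU1 !inE; apply/idP/idP.
      case/andP => mA /forall_inP H; case: (boolP (m \in A)) => mInA.
        apply/orP; left; apply/eqP; apply/setP => x; rewrite inE.
        apply/idP/eqP => [xA | ->] //; apply: contraTeq xA => xm.
        case/maxantiP: mA => /antichainP acA _; apply/negP => xA.
        have := acA m x mInA xA; rewrite eq_sym xm /incomp smin_le //.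
        by move=> /(_ isT).
      apply/orP; right; rewrite mA /=; apply/forall_inP => v vA.
      have := H v vA; case: (boolP (smin v)) => sv; last by rewrite andbT.
      by rewrite -(smin_uniq sm sv) vA in mInA.
    case/orP => [/eqP -> | /andP [mA /forall_inP H]].
      apply/andP; split.
        apply/maxantiP; split; first exact: antichain1.
        by move=> x _; exists m; rewrite ?inE ?(smin_le sm) ?orbT.
      by apply/forall_inP => v; rewrite inE => /eqP ->; rewrite sm andbF.
    by rewrite mA /=; apply/forall_inP => v vA; rewrite (negbTE (H v vA)).
  rewrite cardsU1 addnC; congr (_ + _); apply/eqP; rewrite eqb1 inE negb_and.
  by apply/orP; right; apply/negP => /forall_inP /(_ m); rewrite inE eqxx bm => /(_ isT).
move=> nE /=.
have -> : [set A : {set T} | (A == set0) && true] = [set set0].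
  by apply/setP => A; rewrite !inE andbT.
rewrite cards1; congr (_ + _); apply: eq_card => A; rewrite !inE; congr (_ && _).
apply/forall_inP/forall_inP => H v vA; have := H v vA.
  case: (boolP (basic le v)) => //= bv; case: (boolP (smin v)) => //= sv.
  by move/negP: nE; case; apply/existsP; exists v; rewrite bv sv.
by move/negbTE ->.
Qed.

End Bot.

Variant uspec (Ta Tb T' : finType) (hl : Ta -> T') (hr : Tb -> T') (z : T') : Prop :=
  UL x of z = hl x | UR y of z = hr y.

Section Union.
Variables (Ta Tb T' : finType) (la : rel Ta) (lb : rel Tb) (le' : rel T').
Variables (hl : Ta -> T') (hr : Tb -> T').
Hypothesis hl_inj : injective hl.
Hypothesis hr_inj : injective hr.
Hypothesis hlr : forall x y, hl x != hr y.
Hypothesis usurj : forall z, (exists x, z = hl x) \/ (exists y, z = hr y).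
Hypothesis le_ll : forall x y, le' (hl x) (hl y) = la x y.
Hypothesis le_rr : forall x y, le' (hr x) (hr y) = lb x y.
Hypothesis le_lr : forall x y, le' (hl x) (hr y) = false.
Hypothesis le_rl : forall x y, le' (hr y) (hl x) = false.
Hypothesis pa : po la.
Hypothesis pb : po lb.
Variables (xa : Ta) (xb : Tb).

Let uP z : uspec hl hr z.
Proof. by case: (usurj z) => -[x ->]; [apply: UL | apply: UR]. Qed.
Let ll x y : (hl x == hl y) = (x == y). Proof. exact: inj_eq. Qed.
Let rr x y : (hr x == hr y) = (x == y). Proof. exact: inj_eq. Qed.
Let lr x y : (hl x == hr y) = false. Proof. exact: negbTE. Qed.
Let rl x y : (hr y == hl x) = false. Proof. by rewrite eq_sym lr. Qed.

Definition U (A : {set Ta}) (B : {set Tb}) := hl @: A :|: hr @: B.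

Let memL A B x : (hl x \in U A B) = (x \in A).
Proof.
rewrite /U in_setU mem_imset //; case: (x \in A) => //=.
by apply/imsetP => -[y _ /eqP]; rewrite lr.
Qed.
Let memR A B y : (hr y \in U A B) = (y \in B).
Proof.
rewrite /U in_setU (mem_imset _ _ hr_inj); case: (y \in B); rewrite ?orbT //= orbF.
by apply/imsetP => -[x _ /eqP]; rewrite rl.
Qed.

Let ra : reflexive la. Proof. by case: pa. Qed.
Let rb : reflexive lb. Proof. by case: pb. Qed.

Lemma union_po : po le'.
Proof.
case: pa => ra' aa ta; case: pb => rb' ab tb; split.
- by move=> z; case: (uP z) => [x ->|y ->]; rewrite ?le_ll ?le_rr.
- move=> u v; case: (uP u) => [a ->|a ->]; case: (uP v) => [b ->|b ->];
    rewrite ?le_ll ?le_rr ?le_lr ?le_rl //.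
    by move/aa ->.
  by move/ab ->.
- move=> v u w; case: (uP u) => [a ->|a ->]; case: (uP v) => [b ->|b ->];
    case: (uP w) => [c ->|c ->]; rewrite ?le_ll ?le_rr ?le_lr ?le_rl //.
    exact: ta.
  exact: tb.
Qed.
Let refl' : reflexive le'. Proof. by case: union_po. Qed.

Let decU (C : {set T'}) : C = U (hl @^-1: C) (hr @^-1: C).
Proof.
apply/setP => z; case: (uP z) => [x ->|y ->]; by rewrite ?memL ?memR inE.
Qed.

Lemma card_prod (Q : pred {set T'}) :
  #|[set C | Q C]| = #|[set p : {set Ta} * {set Tb} | Q (U p.1 p.2)]|.
Proof.
have injU : injective (fun p : {set Ta} * {set Tb} => U p.1 p.2).
  move=> [A B] [C D] /= E; congr pair; apply/setP => x.
    by rewrite -(memL A B) E memL.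
  by rewrite -(memR A B) E memR.
rewrite -(card_imset _ injU); apply: eq_card => C; rewrite inE.
apply/idP/imsetP => [QC | [[A B]]]; last by rewrite inE /= => QU ->.
by exists (hl @^-1: C, hr @^-1: C); rewrite // inE /= -decU.
Qed.

Lemma card_prodX (Q : pred {set T'}) QA QB :
  (forall A B, Q (U A B) = QA A && QB B) ->
  #|[set C | Q C]| = #|[set A | QA A]| * #|[set B | QB B]|.
Proof.
move=> H; rewrite card_prod -cardsX; apply: eq_card => -[A B].
by rewrite !inE /= H.
Qed.

Let incLL x y : incomp le' (hl x) (hl y) = incomp la x y.
Proof. by rewrite /incomp !le_ll. Qed.
Let incRR x y : incomp le' (hr x) (hr y) = incomp lb x y.
Proof. by rewrite /incomp !le_rr. Qed.
Let incLR x y : incomp le' (hl x) (hr y).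
Proof. by rewrite /incomp le_lr le_rl. Qed.
Let incRL x y : incomp le' (hr y) (hl x).
Proof. by rewrite /incomp le_lr le_rl. Qed.
Let pltLL x y : plt le' (hl x) (hl y) = plt la x y.
Proof. by rewrite /plt le_ll ll. Qed.
Let pltRR x y : plt lb x y = plt le' (hr x) (hr y).
Proof. by rewrite /plt le_rr rr. Qed.
Let pltLR x y : plt le' (hl x) (hr y) = false.
Proof. by rewrite /plt le_lr. Qed.
Let pltRL x y : plt le' (hr y) (hl x) = false.
Proof. by rewrite /plt le_rl. Qed.

Lemma uac A B : antichain le' (U A B) = antichain la A && antichain lb B.
Proof.
apply/antichainP/andP => [H | [/antichainP HA /antichainP HB]].
  split; apply/antichainP => u v uA vA uv.
    by have := H (hl u) (hl v); rewrite !memL ll incLL; apply.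
  by have := H (hr u) (hr v); rewrite !memR rr incRR; apply.
move=> u v; case: (uP u) => [a ->|a ->]; case: (uP v) => [b ->|b ->];
  rewrite ?memL ?memR ?ll ?rr ?incLL ?incRR ?incLR ?incRL // => ? ? ?.
  exact: HA.
exact: HB.
Qed.

Lemma uma A B : maximal_antichain le' (U A B) =
                maximal_antichain la A && maximal_antichain lb B.
Proof.
apply/maxantiP/andP => [[ac H] | [/maxantiP [acA HA] /maxantiP [acB HB]]].
  rewrite uac in ac; case/andP: ac => acA acB; split; apply/maxantiP; split => // x xA.
    have xA' : hl x \notin U A B by rewrite memL.
    have [c' cC c] := H _ xA'; move: cC c.
    case: (uP c') => [a ->|b ->]; rewrite ?memL ?memR ?le_lr ?le_rl ?le_ll //.
    by move=> aA c; exists a.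
  have xA' : hr x \notin U A B by rewrite memR.
  have [c' cC c] := H _ xA'; move: cC c.
  case: (uP c') => [a ->|b ->]; rewrite ?memL ?memR ?le_lr ?le_rl ?le_rr //.
  by move=> bB c; exists b.
split; first by rewrite uac acA acB.
move=> z; case: (uP z) => [x ->|y ->]; rewrite ?memL ?memR.
  by move=> /HA [a aA c]; exists (hl a); rewrite ?memL ?le_ll.
by move=> /HB [b bB c]; exists (hr b); rewrite ?memR ?le_rr.
Qed.

Lemma ubas_l x : basic le' (hl x) = basic la x.
Proof.
rewrite /basic; congr (~~ _ && ~~ _ && ~~ _).
- apply/existsP/existsP => -[u /existsP [v /and3P [uh vh uv]]].
    move: uh vh uv; case: (uP u) => [a ->|a ->]; case: (uP v) => [b ->|b ->];
      rewrite ?pltLL ?pltRL ?incLL ?andbF // => ah bh ab.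
    by exists a; apply/existsP; exists b; rewrite ah bh ab.
  by exists (hl u); apply/existsP; exists (hl v); rewrite !pltLL incLL uh vh uv.
- apply/existsP/existsP => -[u /existsP [v /and3P [uh vh uv]]].
    move: uh vh uv; case: (uP u) => [a ->|a ->]; case: (uP v) => [b ->|b ->];
      rewrite ?pltLL ?pltLR ?incLL ?andbF // => ah bh ab.
    by exists a; apply/existsP; exists b; rewrite ah bh ab.
  by exists (hl u); apply/existsP; exists (hl v); rewrite !pltLL incLL uh vh uv.
- apply/existsP/existsP => -[u /andP [uh /forallP W]].
    move: uh W; case: (uP u) => [a ->|a ->]; rewrite ?pltLL ?pltRL // => ah W.
    exists a; rewrite ah /=; apply/forallP => w; have := W (hl w).
    by rewrite !ll !le_ll.
  exists (hl u); rewrite pltLL uh /=; apply/forallP => w.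
  case: (uP w) => [c ->|c ->]; rewrite ?ll ?le_ll ?rl ?le_lr ?le_rl //=; exact: W.
Qed.

Lemma ubas_r y : basic le' (hr y) = basic lb y.
Proof.
rewrite /basic; congr (~~ _ && ~~ _ && ~~ _).
- apply/existsP/existsP => -[u /existsP [v /and3P [uh vh uv]]].
    move: uh vh uv; case: (uP u) => [a ->|a ->]; case: (uP v) => [b ->|b ->];
      rewrite -?pltRR ?pltLR ?incRR ?andbF // => ah bh ab.
    by exists a; apply/existsP; exists b; rewrite ah bh ab.
  by exists (hr u); apply/existsP; exists (hr v); rewrite -!pltRR incRR uh vh uv.
- apply/existsP/existsP => -[u /existsP [v /and3P [uh vh uv]]].
    move: uh vh uv; case: (uP u) => [a ->|a ->]; case: (uP v) => [b ->|b ->];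
      rewrite -?pltRR ?pltRL ?incRR ?andbF // => ah bh ab.
    by exists a; apply/existsP; exists b; rewrite ah bh ab.
  by exists (hr u); apply/existsP; exists (hr v); rewrite -!pltRR incRR uh vh uv.
- apply/existsP/existsP => -[u /andP [uh /forallP W]].
    move: uh W; case: (uP u) => [a ->|a ->]; rewrite -?pltRR ?pltLR // => ah W.
    exists a; rewrite ah /=; apply/forallP => w; have := W (hr w).
    by rewrite !rr !le_rr.
  exists (hr u); rewrite -pltRR uh /=; apply/forallP => w.
  case: (uP w) => [c ->|c ->]; rewrite ?rr ?le_rr ?lr ?le_lr ?le_rl //=; exact: W.
Qed.

Lemma union_AC : #|[set C | antichain le' C]| =
  #|[set A | antichain la A]| * #|[set B | antichain lb B]|.
Proof. by apply: card_prodX => A B; rewrite uac. Qed.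

Lemma union_MA : #|[set C | maximal_antichain le' C]| =
  #|[set A | maximal_antichain la A]| * #|[set B | maximal_antichain lb B]|.
Proof. by apply: card_prodX => A B; rewrite uma. Qed.

Lemma union_bas : #|[set z | basic le' z]| =
  #|[set x | basic la x]| + #|[set y | basic lb y]|.
Proof.
have -> : [set z | basic le' z] = U [set x | basic la x] [set y | basic lb y].
  apply/setP => z; case: (uP z) => [x ->|y ->].
    by rewrite memL !inE ubas_l.
  by rewrite memR !inE ubas_r.
rewrite /U cardsU.
have -> : hl @: [set x | basic la x] :&: hr @: [set y | basic lb y] = set0.
  apply/setP => z; rewrite !inE; apply/negP => /andP [/imsetP [x _ ->]].
  by case/imsetP => y _ /eqP; rewrite lr.
by rewrite cards0 subn0 !card_imset.
Qed.

Lemma union_MA0 :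
  #|[set C | maximal_antichain le' C & [forall v in C, ~~ basic le' v]]| =
  #|[set A | maximal_antichain la A & [forall v in A, ~~ basic la v]]| *
  #|[set B | maximal_antichain lb B & [forall v in B, ~~ basic lb v]]|.
Proof.
apply: card_prodX => A B; rewrite uma /U forall_setU !forall_imset.
have -> : [forall x in A, ~~ basic le' (hl x)] = [forall x in A, ~~ basic la x].
  by apply/forall_inP/forall_inP => H v vA; have := H v vA; rewrite ubas_l.
have -> : [forall x in B, ~~ basic le' (hr x)] = [forall x in B, ~~ basic lb x].
  by apply/forall_inP/forall_inP => H v vA; have := H v vA; rewrite ubas_r.
case: (maximal_antichain la A); case: (maximal_antichain lb B);
  case: [forall x in A, ~~ basic la x]; by case: [forall x in B, ~~ basic lb x].
Qed.

Lemma uch A B : chain le' (U A B) =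
  [&& chain la A, chain lb B & (A == set0) || (B == set0)].
Proof.
apply/chainP/and3P => [H | [/chainP HA /chainP HB AB]].
  split.
  - by apply/chainP => u v uA vA; have := H (hl u) (hl v); rewrite !memL !le_ll; apply.
  - by apply/chainP => u v uA vA; have := H (hr u) (hr v); rewrite !memR !le_rr; apply.
  - case: (boolP (A == set0)) => [AA|/set0Pn [a aA]]; first by apply/orP; left.
    case: (boolP (B == set0)) => [BB|/set0Pn [b bB]]; first by apply/orP; right.
    by have := H (hl a) (hr b); rewrite memL memR le_lr le_rl => /(_ aA bB).
move=> u v; case: (uP u) => [a ->|a ->]; case: (uP v) => [b ->|b ->];
  rewrite ?memL ?memR ?le_ll ?le_rr ?le_lr ?le_rl.
- exact: HA.
- move=> aA bB; case/orP: AB => /eqP E; by rewrite E inE in aA bB.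
- move=> aA bB; case/orP: AB => /eqP E; by rewrite E inE in aA bB.
- exact: HB.
Qed.

Let nonemptyA A : maximal_chain la A -> exists2 a, a \in A & true.
Proof.
case/(maxchainP ra) => _ H.
by case: (boolP (xa \in A)) => [x0A | /H [a aA _]]; [exists xa | exists a].
Qed.
Let nonemptyB B : maximal_chain lb B -> exists2 a, a \in B & true.
Proof.
case/(maxchainP rb) => _ H.
by case: (boolP (xb \in B)) => [x0A | /H [a aA _]]; [exists xb | exists a].
Qed.

Lemma umc A B : maximal_chain le' (U A B) =
  (maximal_chain la A && (B == set0)) || ((A == set0) && maximal_chain lb B).
Proof.
apply/idP/idP.
  case/(maxchainP refl') => ch H; move: ch; rewrite uch => /and3P [chA chB].
  case/orP => /eqP E; subst.
    apply/orP; right; rewrite eqxx /=; apply/(maxchainP rb); split => // y yB.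
    have yB' : hr y \notin U set0 B by rewrite memR.
    have [c' cC i] := H _ yB'; move: cC i.
    case: (uP c') => [a ->|b ->]; rewrite ?memL ?memR ?inE // incRR => bB i.
    by exists b.
  apply/orP; left; rewrite eqxx andbT; apply/(maxchainP ra); split => // x xA.
  have xA' : hl x \notin U A set0 by rewrite memL.
  have [c' cC i] := H _ xA'; move: cC i.
  case: (uP c') => [a ->|b ->]; rewrite ?memL ?memR ?inE // incLL => aA i.
  by exists a.
case/orP => /andP [].
  move=> mA /eqP ->; have [a aA _] := nonemptyA mA.
  case/(maxchainP ra): mA => chA HA; apply/(maxchainP refl'); split.
    by rewrite uch chA chain0 eqxx orbT.
  move=> z; case: (uP z) => [x ->|y ->]; rewrite ?memL.
    by move=> /HA [c cC i]; exists (hl c); rewrite ?memL ?incLL.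
  by move=> _; exists (hl a); rewrite ?memL ?incRL.
move=> /eqP -> mB; have [b bB _] := nonemptyB mB.
case/(maxchainP rb): mB => chB HB; apply/(maxchainP refl'); split.
  by rewrite uch chB chain0 eqxx.
move=> z; case: (uP z) => [x ->|y ->]; rewrite ?memR.
  by move=> _; exists (hr b); rewrite ?memR ?incLR.
by move=> /HB [c cC i]; exists (hr c); rewrite ?memR ?incRR.
Qed.

Lemma ucs S R : cutset le' (U S R) = cutset la S && cutset lb R.
Proof.
apply/cutsetP/andP => [H | [/cutsetP HS /cutsetP HR]].
  split; apply/cutsetP => C mC.
    have mC' : maximal_chain le' (U C set0) by rewrite umc mC eqxx.
    have [z zS zC] := H _ mC'; move: zS zC.
    case: (uP z) => [x ->|y ->]; rewrite ?memL ?memR ?inE ?andbF // => xS xC.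
    by exists x.
  have mC' : maximal_chain le' (U set0 C) by rewrite umc mC eqxx orbT.
  have [z zS zC] := H _ mC'; move: zS zC.
  case: (uP z) => [x ->|y ->]; rewrite ?memL ?memR ?inE ?andbF // => xS xC.
  by exists y.
move=> C'; rewrite (decU C') umc => /orP [/andP [mC _] | /andP [_ mD]].
  by have [x xS xC] := HS _ mC; exists (hl x); rewrite memL.
by have [x xS xC] := HR _ mD; exists (hr x); rewrite memR.
Qed.

Lemma union_CS : #|[set C | cutset le' C]| =
  #|[set A | cutset la A]| * #|[set B | cutset lb B]|.
Proof. by apply: card_prodX => A B; rewrite ucs. Qed.

End Union.

From mathcomp Require Import zify.

Lemma vsize_gt0 t : 0 < vsize t.
Proof. by elim: t => //= a IHa b IHb; rewrite addn_gt0 IHa. Qed.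

Definition wd (a : vtree) : 'I_(vsize a) -> 'I_(vsize a).+1 :=
  widen_ord (leqnSn (vsize a)).
Arguments wd : clear implicits.

Lemma ext_w (a : vtree) : ext_struct (wd a) ord_max.
Proof.
split.
- by move=> x y /(congr1 val) /= E; apply: val_inj.
- by move=> x; rewrite -val_eqE /= neq_ltn ltn_ord.
- move=> z; rewrite -val_eqE /= => zn.
  have zlt : z < vsize a by have := ltn_ord z; lia.
  by exists (Ordinal zlt); apply/val_inj.
Qed.

Lemma top_hh (a : vtree) x y : vord (VTop a) (wd a x) (wd a y) = vord a x y.
Proof. by rewrite /vord /= (ltn_eqF (ltn_ord y)) !ltn_ord. Qed.
Lemma top_zg (a : vtree) (z : 'I_(vsize (VTop a))) : vord (VTop a) z ord_max.
Proof. by rewrite /vord /= eqxx -ltnS ltn_ord. Qed.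
Lemma top_gh (a : vtree) x : vord (VTop a) ord_max (wd a x) = false.
Proof. by rewrite /vord /= (ltn_eqF (ltn_ord x)) ltnn. Qed.

Lemma bot_hh (a : vtree) x y : vord (VBot a) (wd a x) (wd a y) = vord a x y.
Proof. by rewrite /vord /= (ltn_eqF (ltn_ord x)) !ltn_ord. Qed.
Lemma bot_gz (a : vtree) (z : 'I_(vsize (VBot a))) : vord (VBot a) ord_max z.
Proof. by rewrite /vord /= eqxx -ltnS ltn_ord. Qed.
Lemma bot_hg (a : vtree) x : vord (VBot a) (wd a x) ord_max = false.
Proof. by rewrite /vord /= (ltn_eqF (ltn_ord x)) ltnn andbF. Qed.

Arguments top_hh : clear implicits.
Arguments top_zg : clear implicits.
Arguments top_gh : clear implicits.
Arguments bot_hh : clear implicits.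
Arguments bot_gz : clear implicits.
Arguments bot_hg : clear implicits.

Section UnionConc.
Variables a b : vtree.
Let hl := @lshift (vsize a) (vsize b).
Let hr := @rshift (vsize a) (vsize b).

Lemma un_inj_l : injective hl. Proof. exact: lshift_inj. Qed.
Lemma un_inj_r : injective hr. Proof. exact: rshift_inj. Qed.
Lemma un_lr x y : hl x != hr y.
Proof. rewrite -val_eqE /=; have := ltn_ord x; lia. Qed.
Lemma un_surj (z : 'I_(vsize a + vsize b)) :
  (exists x, z = hl x) \/ (exists y, z = hr y).
Proof.
case: (splitP z) => [j E | k E]; [left; exists j | right; exists k]; exact: val_inj.
Qed.
Lemma un_ll x y : vord (VUnion a b) (hl x) (hl y) = vord a x y.
Proof. by rewrite /vord /= !ltn_ord. Qed.
Lemma un_rr x y : vord (VUnion a b) (hr x) (hr y) = vord b x y.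
Proof.
rewrite /vord /=.
have -> : (vsize a + x < vsize a) = false by lia.
have -> : (vsize a <= vsize a + x) && (vsize a <= vsize a + y) = true by lia.
by rewrite !addKn.
Qed.
Lemma un_lr' x y : vord (VUnion a b) (hl x) (hr y) = false.
Proof.
rewrite /vord /=.
have -> : (x < vsize a) && (vsize a + y < vsize a) = false by lia.
have -> : (vsize a <= x) && (vsize a <= vsize a + y) = false by have := ltn_ord x; lia.
by [].
Qed.
Lemma un_rl' x y : vord (VUnion a b) (hr y) (hl x) = false.
Proof.
rewrite /vord /=.
have -> : (vsize a + y < vsize a) && (x < vsize a) = false by lia.
have -> : (vsize a <= vsize a + y) && (vsize a <= x) = false by have := ltn_ord x; lia.
by [].
Qed.
End UnionConc.
Arguments un_inj_l : clear implicits.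
Arguments un_inj_r : clear implicits.
Arguments un_lr : clear implicits.
Arguments un_surj : clear implicits.
Arguments un_ll : clear implicits.
Arguments un_rr : clear implicits.
Arguments un_lr' : clear implicits.
Arguments un_rl' : clear implicits.


Lemma pt_all (x y : 'I_(vsize VPoint)) : vord VPoint x y.
Proof. by rewrite /vord (ord1 x) (ord1 y). Qed.

Lemma vpo t : po (vord t).
Proof.
elim: t => [|a IHa b IHb|a IHa|a IHa].
- split; first by move=> x; apply: pt_all.
    by move=> x y _; rewrite (ord1 x) (ord1 y).
  by move=> x y z _ _; apply: pt_all.
- exact: (union_po (un_surj a b) (un_ll a b) (un_rr a b) (un_lr' a b) (un_rl' a b) IHa IHb).
- exact: (top_po (ext_w a) (top_hh a) (top_zg a) (top_gh a) IHa).
- exact: (bot_po (ext_w a) (bot_hh a) (bot_gz a) (bot_hg a) IHa).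
Qed.

Definition cAC t := #|[set A : {set 'I_(vsize t)} | antichain (vord t) A]|.
Definition cMA t := #|[set A : {set 'I_(vsize t)} | maximal_antichain (vord t) A]|.
Definition cB t := #|[set v : 'I_(vsize t) | basic (vord t) v]|.
Definition cMA0 t := #|[set A : {set 'I_(vsize t)} | maximal_antichain (vord t) A &
                         [forall v in A, ~~ basic (vord t) v]]|.
Definition cCS t := #|[set S : {set 'I_(vsize t)} | cutset (vord t) S]|.

Definition pt0 (a : vtree) : 'I_(vsize a) := Ordinal (vsize_gt0 a).

Lemma pt_ac (A : {set 'I_(vsize VPoint)}) : antichain (vord VPoint) A.
Proof. by apply/antichainP => u v; rewrite (ord1 u) (ord1 v) eqxx. Qed.

Lemma pt_AC : cAC VPoint = 2.
Proof.
rewrite /cAC.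
have -> : [set A : {set 'I_(vsize VPoint)} | antichain (vord VPoint) A] = [set A | true].
  by apply/setP => A; rewrite !inE pt_ac.
by rewrite card_allsets card_ord.
Qed.

Lemma pt_setT (A : {set 'I_(vsize VPoint)}) : ord0 \in A -> A = setT.
Proof. by move=> oA; apply/setP => x; rewrite inE (ord1 x). Qed.

Lemma pt_ma (A : {set 'I_(vsize VPoint)}) : maximal_antichain (vord VPoint) A = (A == setT).
Proof.
apply/maxantiP/eqP.
  case=> _ H; apply: pt_setT; apply: contraT => nx; have [a aA _] := H _ nx.
  by move: aA; rewrite (ord1 a) => aA; rewrite aA in nx.
by move=> ->; split; [exact: pt_ac | move=> x; rewrite inE].
Qed.

Lemma pt_MA : cMA VPoint = 1.
Proof.
rewrite /cMA.
have -> : [set A : {set 'I_(vsize VPoint)} | maximal_antichain (vord VPoint) A] = [set setT].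
  by apply/setP => A; rewrite !inE pt_ma.
by rewrite cards1.
Qed.

Lemma pt_basic (x : 'I_(vsize VPoint)) : basic (vord VPoint) x.
Proof.
have plt0 u v : plt (vord VPoint) u v = false.
  by rewrite /plt (ord1 u) (ord1 v) eqxx andbF.
rewrite /basic; apply/andP; split; first (apply/andP; split).
- by apply/existsP => -[u /existsP [v]]; rewrite plt0.
- by apply/existsP => -[u /existsP [v]]; rewrite plt0.
- by apply/existsP => -[u]; rewrite plt0.
Qed.

Lemma pt_B : cB VPoint = 1.
Proof.
rewrite /cB.
have -> : [set v : 'I_(vsize VPoint) | basic (vord VPoint) v] = setT.
  by apply/setP => v; rewrite !inE pt_basic.
by rewrite cardsT card_ord.
Qed.

Lemma pt_MA0 : cMA0 VPoint = 0.
Proof.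
rewrite /cMA0.
have -> : [set A : {set 'I_(vsize VPoint)} | maximal_antichain (vord VPoint) A &
            [forall v in A, ~~ basic (vord VPoint) v]] = set0.
  apply/setP => A; rewrite !inE pt_ma; apply/negP => /andP [/eqP -> /forall_inP H].
  by have := H ord0; rewrite inE pt_basic => /(_ isT).
by rewrite cards0.
Qed.

Lemma pt_CS : cCS VPoint = 1.
Proof.
rewrite /cCS.
have r : reflexive (vord VPoint) by move=> x; apply: pt_all.
have -> : [set S : {set 'I_(vsize VPoint)} | cutset (vord VPoint) S] = [set setT].
  apply/setP => S; rewrite !inE; apply/cutsetP/eqP.
    move=> H; have mT : maximal_chain (vord VPoint) setT.
      apply/(maxchainP r); split; first by apply/chainP => u v _ _; rewrite pt_all.
      by move=> x; rewrite inE.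
    have [x xS _] := H _ mT; move: xS; rewrite (ord1 x); exact: pt_setT.
  move=> -> C /(maxchainP r) [_ H].
  case: (boolP (ord0 \in C)) => [oC | /H [c cC _]]; first by exists ord0; rewrite ?inE.
  by exists c; rewrite ?inE.
by rewrite cards1.
Qed.

Section Recs.
Variables a b : vtree.

Lemma AC_U : cAC (VUnion a b) = cAC a * cAC b.
Proof.
exact: (union_AC (un_inj_l a b) (un_inj_r a b) (un_lr a b) (un_surj a b)
  (un_ll a b) (un_rr a b) (un_lr' a b) (un_rl' a b)).
Qed.
Lemma AC_T : cAC (VTop a) = cAC a + 1.
Proof. exact: (top_AC (ext_w a) (top_hh a) (top_zg a)). Qed.
Lemma AC_B : cAC (VBot a) = cAC a + 1.
Proof. exact: (bot_AC (ext_w a) (bot_hh a) (bot_gz a)). Qed.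

Lemma MA_U : cMA (VUnion a b) = cMA a * cMA b.
Proof.
exact: (union_MA (un_inj_l a b) (un_inj_r a b) (un_lr a b) (un_surj a b)
  (un_ll a b) (un_rr a b) (un_lr' a b) (un_rl' a b)).
Qed.
Lemma MA_T : cMA (VTop a) = cMA a + 1.
Proof. exact: (top_MA (ext_w a) (top_hh a) (top_zg a) (pt0 a)). Qed.
Lemma MA_B : cMA (VBot a) = cMA a + 1.
Proof. exact: (bot_MA (ext_w a) (bot_hh a) (bot_gz a) (pt0 a)). Qed.

Lemma B_U : cB (VUnion a b) = cB a + cB b.
Proof.
exact: (union_bas (un_inj_l a b) (un_inj_r a b) (un_lr a b) (un_surj a b)
  (un_ll a b) (un_rr a b) (un_lr' a b) (un_rl' a b)).
Qed.
Lemma B_T : cB (VTop a) = cB a.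
Proof. exact: (top_bas (ext_w a) (top_hh a) (top_zg a) (top_gh a) (vpo a) (pt0 a)). Qed.
Lemma B_B : cB (VBot a) = cB a.
Proof. exact: (bot_bas (ext_w a) (bot_hh a) (bot_gz a) (bot_hg a) (vpo a) (pt0 a)). Qed.

Lemma MA0_U : cMA0 (VUnion a b) = cMA0 a * cMA0 b.
Proof.
exact: (union_MA0 (un_inj_l a b) (un_inj_r a b) (un_lr a b) (un_surj a b)
  (un_ll a b) (un_rr a b) (un_lr' a b) (un_rl' a b)).
Qed.
Lemma MA0_T : cMA0 (VTop a) = cMA0 a + 1.
Proof. exact: (top_MA0 (ext_w a) (top_hh a) (top_zg a) (top_gh a) (vpo a) (pt0 a)). Qed.
Lemma MA0_B : cMA0 (VBot a) = cMA0 a + 1.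
Proof. exact: (bot_MA0 (ext_w a) (bot_hh a) (bot_gz a) (bot_hg a) (vpo a) (pt0 a)). Qed.

Lemma CS_U : cCS (VUnion a b) = cCS a * cCS b.
Proof.
exact: (union_CS (un_inj_l a b) (un_inj_r a b) (un_lr a b) (un_surj a b)
  (un_ll a b) (un_rr a b) (un_lr' a b) (un_rl' a b) (vpo a) (vpo b) (pt0 a) (pt0 b)).
Qed.
Lemma CS_T : cCS (VTop a) = cCS a + 2 ^ vsize a.
Proof.
rewrite /cCS (top_CS (ext_w a) (top_hh a) (top_zg a) (top_gh a) (vpo a)).
by rewrite card_ord.
Qed.
Lemma CS_B : cCS (VBot a) = cCS a + 2 ^ vsize a.
Proof.
rewrite /cCS (bot_CS (ext_w a) (bot_hh a) (bot_gz a) (bot_hg a) (vpo a)).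
by rewrite card_ord.
Qed.
End Recs.

Local Open Scope ring_scope.

Lemma vp_AC t : vpoly t (2 : int) 1 = (cAC t)%:Z.
Proof.
elim: t => [|a IHa b IHb|a IHa|a IHa] /=.
- by rewrite pt_AC.
- by rewrite IHa IHb AC_U PoszM.
- by rewrite IHa AC_T expr1n PoszD.
- by rewrite IHa AC_B expr1n PoszD.
Qed.

Lemma vp_MA t : vpoly t (1 : int) 1 = (cMA t)%:Z.
Proof.
elim: t => [|a IHa b IHb|a IHa|a IHa] /=.
- by rewrite pt_MA.
- by rewrite IHa IHb MA_U PoszM.
- by rewrite IHa MA_T expr1n PoszD.
- by rewrite IHa MA_B expr1n PoszD.
Qed.

Lemma vp_MA0 t : vpoly t (0 : int) 1 = (cMA0 t)%:Z.
Proof.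
elim: t => [|a IHa b IHb|a IHa|a IHa] /=.
- by rewrite pt_MA0.
- by rewrite IHa IHb MA0_U PoszM.
- by rewrite IHa MA0_T expr1n PoszD.
- by rewrite IHa MA0_B expr1n PoszD.
Qed.

Lemma vp_B (R : comNzRingType) (x : R) t : vpoly t x 0 = x ^+ cB t.
Proof.
elim: t => [|a IHa b IHb|a IHa|a IHa] /=.
- by rewrite pt_B expr1.
- by rewrite IHa IHb B_U exprD.
- by rewrite IHa B_T expr0n eqn0Ngt vsize_gt0 /= addr0.
- by rewrite IHa B_B expr0n eqn0Ngt vsize_gt0 /= addr0.
Qed.

Lemma pow2z n : ((2 ^ n)%N : int) = 2 ^+ n.
Proof. by rewrite -natz natrX. Qed.

Lemma vp_CS t : vpoly t (1 : int) 2 = (cCS t)%:Z.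
Proof.
elim: t => [|a IHa b IHb|a IHa|a IHa] /=.
- by rewrite pt_CS.
- by rewrite IHa IHb CS_U PoszM.
- by rewrite IHa CS_T PoszD pow2z.
- by rewrite IHa CS_B PoszD pow2z.
Qed.

Lemma vp_22 t : vpoly t (2 : int) 2 = 2 ^+ vsize t.
Proof.
elim: t => [|a IHa b IHb|a IHa|a IHa] /=.
- by rewrite expr1.
- by rewrite IHa IHb exprD.
- by rewrite IHa exprS mulr_natl mulr2n.
- by rewrite IHa exprS mulr_natl mulr2n.
Qed.

Unset Implicit Arguments.

Theorem proposition3p19 (t : vtree) :
  let T := 'I_(vsize t) in
  let le := vord t in
  vpoly t (1 : int) 1 = (#|[set A : {set T} | maximal_antichain le A]|)%:Z /\
  (forall (R : comNzRingType) (x : R),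
      vpoly t x 0 = x ^+ #|[set v : T | basic le v]|) /\
  vpoly t (0 : int) 1
    = (#|[set A : {set T} | maximal_antichain le A &
                            [forall v in A, ~~ basic le v]]|)%:Z /\
  vpoly t (2 : int) 1 = (#|[set A : {set T} | antichain le A]|)%:Z /\
  vpoly t (1 : int) 2 = (#|[set S : {set T} | cutset le S]|)%:Z /\
  vpoly t (2 : int) 2 = 2 ^+ vsize t.
Proof.
move=> T le.
split; first exact: vp_MA.
split; first by move=> R x; exact: vp_B.
split; first exact: vp_MA0.
split; first exact: vp_AC.
split; first exact: vp_CS.
exact: vp_22.
Qed.
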